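(* Let $\mathcal Z_{\mathcal S}=(X,(\phi_j)_{j=0}^{n-1},(\rho_j)_{j=0}^{n-1})$ be a Matkowski contractive GIFZS of degree $m$ on a metric space $X$, and let $\varphi_j$ be a witness for $\phi_j$, $j=0,\dots,n-1$. Then the operator $\mathcal Z_{\mathcal S}:(\mathcal F_X^* )^m\to\mathcal F_X^*$ is a generalized Matkowski contraction (with respect to $d_\infty^m$ and $d_\infty$) with witness $\varphi=\max_j\varphi_j$, i.e. $d_\infty(\mathcal Z_{\mathcal S}(u_0,\dots,u_{m-1}),\mathcal Z_{\mathcal S}(v_0,\dots,v_{m-1}))\le\varphi(\max_i d_\infty(u_i,v_i))$. In particular, if $\mathcal Z_{\mathcal S}$ is Lipschitz contractive, then the operator $\mathcal Z_{\mathcal S}$ is Lipschitz with constant at most $\max_j\mathrm{Lip}(\phi_j)<1$.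
   Context: A fuzzy subset of $X$ is $u:X\to[0,1]$. For $\alpha\in(0,1]$, $[u]^\alpha=\{x:u(x)\ge\alpha\}$, $[u]^0=\overline{\{x:u(x)>0\}}$. $\mathcal F_X^*$: fuzzy subsets that are normal ($u(x)=1$ for some $x$), usc, compactly supported ($[u]^0$ compact). $h$: Hausdorff metric; $d_\infty(u,v)=\sup_{\alpha\in[0,1]}h([u]^\alpha,[v]^\alpha)$; $d_\infty^m((u_i),(v_i))=\max_i d_\infty(u_i,v_i)$. $X^m$ carries the maximum metric $d^m$. For $T:Z\to Y$, $T(u)(y)=\sup\{u(z):T(z)=y\}$ if $y\in T(Z)$, else $0$; $\rho(u)=\rho\circ u$; $(u_0\times\cdots\times u_{m-1})(x_0,\dots,x_{m-1})=\min_iu_i(x_i)$; $\vee$ is pointwise max. A grey level map is a non-identically-zero $\rho:[0,1]\to[0,1]$; a family $(\rho_j)_{j=0}^{n-1}$ is admissible if each $\rho_j$ is nondecreasing and right continuous, $\rho_j(0)=0$ for all $j$, and $\rho_j(1)=1$ for some $j$. A map $f:M^m\to M$ (or between metric spaces) is a generalized Matkowski contraction if there is a nondecreasing $\varphi:[0,\infty)\to[0,\infty)$ with $\varphi^{(k)}(t)\to0$ for every $t>0$ ($k$-th iterate) such that $d(f(x),f(y))\le\varphi(d^m(x,y))$; $\varphi$ is a witness. A GIFS of degree $m$ is $\mathcal S=(X,(\phi_j)_{j=0}^{n-1})$ with continuous $\phi_j:X^m\to X$; a GIFZS of degree $m$ is $(X,(\phi_j),(\rho_j))$ with $(X,(\phi_j))$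 a GIFS of degree $m$ and $(\rho_j)$ admissible; it is Matkowski (resp. Lipschitz) contractive if every $\phi_j$ is a generalized Matkowski contraction (resp. $\mathrm{Lip}(\phi_j)<1$). Its operator is $\mathcal Z_{\mathcal S}(u_0,\dots,u_{m-1})=\bigvee_j\rho_j(\phi_j(u_0\times\cdots\times u_{m-1}))$. *)

(* Defs.v *)
From Stdlib Require Import Reals Lra Lia Classical ClassicalEpsilon List.
Open Scope R_scope.

(** Generic supremum / infimum of a set of reals (least upper bound when it
    exists, chosen by classical choice; only used on nonempty bounded sets). *)
Definition Rsup (E : R -> Prop) : R := epsilon (inhabits 0) (fun l => is_lub E l).
Definition Rinf (E : R -> Prop) : R := - Rsup (fun x => E (- x)).

(** Finite index set {0,...,m-1}; X^m is [idx m -> X]. *)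
Definition idx (m : nat) : Type := {i : nat | (i < m)%nat}.

Definition ext {A : Type} (m : nat) (dflt : A) (g : idx m -> A) (i : nat) : A :=
  match Compare_dec.lt_dec i m with
  | left H => g (exist _ i H)
  | right _ => dflt
  end.

Fixpoint foldmin (k : nat) (g : nat -> R) : R :=
  match k with O => 1 | S k' => Rmin (foldmin k' g) (g k') end.
Fixpoint foldmax (k : nat) (g : nat -> R) : R :=
  match k with O => 0 | S k' => Rmax (foldmax k' g) (g k') end.

(** min_{i<m} g i (values in [0,1], empty min = 1) and
    max_{i<m} g i (nonnegative values, empty max = 0). *)
Definition fmin (m : nat) (g : idx m -> R) : R := foldmin m (ext m 1 g).
Definition fmax (m : nat) (g : idx m -> R) : R := foldmax m (ext m 0 g).

Definition dm (M : Metric_Space) (m : nat) (x y : idx m -> Base M) : R :=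
  fmax m (fun i => dist M (x i) (y i)).

Definition is_open (M : Metric_Space) (U : Base M -> Prop) : Prop :=
  forall x, U x -> exists r, 0 < r /\ forall y, dist M x y < r -> U y.

Definition is_compact (M : Metric_Space) (K : Base M -> Prop) : Prop :=
  forall (I : Type) (U : I -> Base M -> Prop),
    (forall i, is_open M (U i)) ->
    (forall x, K x -> exists i, U i x) ->
    exists l : list I, forall x, K x -> exists i, In i l /\ U i x.

Definition closure (M : Metric_Space) (S : Base M -> Prop) : Base M -> Prop :=
  fun x => forall eps, 0 < eps -> exists y, S y /\ dist M x y < eps.

Definition dist_to (M : Metric_Space) (a : Base M) (B : Base M -> Prop) : R :=
  Rinf (fun r => exists b, B b /\ r = dist M a b).

Definition hausdorff (M : Metric_Space) (A B : Base M -> Prop) : R :=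
  Rmax (Rsup (fun r => exists a, A a /\ r = dist_to M a B))
       (Rsup (fun r => exists b, B b /\ r = dist_to M b A)).

Definition fuzzy {X : Type} (u : X -> R) : Prop := forall x, 0 <= u x <= 1.

Definition level (M : Metric_Space) (u : Base M -> R) (a : R) : Base M -> Prop :=
  fun x => if Rlt_dec 0 a then a <= u x else closure M (fun y => 0 < u y) x.

Definition usc (M : Metric_Space) (u : Base M -> R) : Prop :=
  forall x eps, 0 < eps ->
    exists delta, 0 < delta /\ forall y, dist M x y < delta -> u y < u x + eps.

Definition Fstar (M : Metric_Space) (u : Base M -> R) : Prop :=
  fuzzy u /\ (exists x, u x = 1) /\ usc M u /\ is_compact M (level M u 0).

Definition d_inf (M : Metric_Space) (u v : Base M -> R) : R :=
  Rsup (fun r => exists a, 0 <= a <= 1 /\ r = hausdorff M (level M u a) (level M v a)).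

Definition d_inf_m (M : Metric_Space) (m : nat) (u v : idx m -> Base M -> R) : R :=
  fmax m (fun i => d_inf M (u i) (v i)).

Definition zadeh {Z Y : Type} (T : Z -> Y) (u : Z -> R) : Y -> R :=
  fun y =>
    match excluded_middle_informative (exists z, T z = y) with
    | left _ => Rsup (fun r => exists z, T z = y /\ r = u z)
    | right _ => 0
    end.

Definition fprod {X : Type} (m : nat) (u : idx m -> X -> R) : (idx m -> X) -> R :=
  fun x => fmin m (fun i => u i (x i)).

Definition grey_level_map (rho : R -> R) : Prop :=
  (forall t, 0 <= t <= 1 -> 0 <= rho t <= 1) /\
  (exists t, 0 <= t <= 1 /\ rho t <> 0).

Definition admissible (n : nat) (rho : idx n -> R -> R) : Prop :=
  (forall j, grey_level_map (rho j)) /\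
  (forall j s t, 0 <= s <= t -> t <= 1 -> rho j s <= rho j t) /\
  (forall j t, 0 <= t < 1 -> forall eps, 0 < eps -> exists delta, 0 < delta /\
      forall s, t <= s < t + delta -> s <= 1 -> Rabs (rho j s - rho j t) < eps) /\
  (forall j, rho j 0 = 0) /\
  (exists j, rho j 1 = 1).

Definition matkowski_witness (phi : R -> R) : Prop :=
  (forall t, 0 <= t -> 0 <= phi t) /\
  (forall s t, 0 <= s <= t -> phi s <= phi t) /\
  (forall t, 0 < t -> Un_cv (fun k => Nat.iter k phi t) 0).

Definition gen_matkowski {A B : Type} (dA : A -> A -> R) (dB : B -> B -> R)
  (f : A -> B) (phi : R -> R) : Prop :=
  matkowski_witness phi /\ forall x y, dB (f x) (f y) <= phi (dA x y).

Definition continuous_m (M : Metric_Space) (m : nat) (f : (idx m -> Base M) -> Base M) : Prop :=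
  forall x eps, 0 < eps -> exists delta, 0 < delta /\
    forall y, dm M m x y < delta -> dist M (f x) (f y) < eps.

Definition Zop (M : Metric_Space) (m n : nat)
  (phi : idx n -> (idx m -> Base M) -> Base M) (rho : idx n -> R -> R)
  (u : idx m -> Base M -> R) : Base M -> R :=
  fun x => fmax n (fun j => rho j (zadeh (phi j) (fprod m u) x)).

(* Main.v *)
Require Import Defs.
From Stdlib Require Import Reals Lra Lia Classical ClassicalEpsilon List Arith ZArith.
Open Scope R_scope.

Lemma Rsup_spec (E : R -> Prop) :
  (exists x, E x) -> (exists b, forall x, E x -> x <= b) -> is_lub E (Rsup E).
Proof.
  intros Hne [b Hb]. unfold Rsup. apply epsilon_spec.
  destruct (completeness E) as [l Hl]; [exists b; exact Hb | exact Hne | exists l; exact Hl].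
Qed.

Lemma Rsup_le (E : R -> Prop) c :
  (exists x, E x) -> (forall x, E x -> x <= c) -> Rsup E <= c.
Proof.
  intros Hne Hc. destruct (Rsup_spec E Hne (ex_intro _ c Hc)) as [_ H]. apply H. exact Hc.
Qed.

Lemma Rsup_ge (E : R -> Prop) x :
  (exists b, forall x, E x -> x <= b) -> E x -> x <= Rsup E.
Proof.
  intros Hb Hx. destruct (Rsup_spec E (ex_intro _ x Hx) Hb) as [H _]. apply H. exact Hx.
Qed.

Lemma Rsup_approx (E : R -> Prop) eps :
  (exists x, E x) -> (exists b, forall x, E x -> x <= b) -> 0 < eps ->
  exists x, E x /\ Rsup E - eps < x.
Proof.
  intros Hne Hb He. destruct (Rsup_spec E Hne Hb) as [H1 H2].
  apply NNPP. intro Hn.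
  assert (Rsup E <= Rsup E - eps); [|lra].
  apply H2. intros x Hx. apply Rnot_lt_le. intro Hlt. apply Hn. exists x. split; auto.
Qed.

Lemma Rinf_le (E : R -> Prop) b x :
  (forall y, E y -> b <= y) -> E x -> Rinf E <= x.
Proof.
  intros Hb Hx. unfold Rinf.
  assert (- x <= Rsup (fun y => E (- y))); [|lra].
  apply Rsup_ge. exists (-b). intros y Hy. specialize (Hb _ Hy). lra.
  rewrite Ropp_involutive. exact Hx.
Qed.

Lemma Rinf_ge (E : R -> Prop) c :
  (exists x, E x) -> (forall y, E y -> c <= y) -> c <= Rinf E.
Proof.
  intros [x Hx] Hc. unfold Rinf.
  assert (Rsup (fun y => E (- y)) <= - c); [|lra].
  apply Rsup_le. exists (-x). rewrite Ropp_involutive. exact Hx.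
  intros y Hy. specialize (Hc _ Hy). lra.
Qed.

Lemma Rinf_approx (E : R -> Prop) b eps :
  (exists x, E x) -> (forall y, E y -> b <= y) -> 0 < eps ->
  exists x, E x /\ x < Rinf E + eps.
Proof.
  intros [x0 Hx0] Hb He. unfold Rinf.
  destruct (Rsup_approx (fun y => E (- y)) eps) as [y [Hy Hlt]].
  exists (-x0). rewrite Ropp_involutive. exact Hx0.
  exists (-b). intros y Hy. specialize (Hb _ Hy). lra. exact He.
  exists (-y). split. exact Hy. lra.
Qed.

Lemma foldmax_ge0 k g : 0 <= foldmax k g.
Proof. induction k; simpl. lra. apply Rle_trans with (foldmax k g); auto. apply Rmax_l. Qed.

Lemma foldmax_le k g c : 0 <= c -> (forall i, (i < k)%nat -> g i <= c) -> foldmax k g <= c.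
Proof.
  intros Hc; induction k; simpl; intros H. exact Hc.
  apply Rmax_lub. apply IHk. intros; apply H; lia. apply H; lia.
Qed.

Lemma foldmax_lt k g c : 0 < c -> (forall i, (i < k)%nat -> g i < c) -> foldmax k g < c.
Proof.
  intros Hc; induction k; simpl; intros H. exact Hc.
  apply Rmax_lub_lt. apply IHk. intros; apply H; lia. apply H; lia.
Qed.

Lemma foldmax_ub k g i : (i < k)%nat -> g i <= foldmax k g.
Proof.
  induction k; simpl; intros H. lia.
  destruct (Nat.eq_dec i k). subst. apply Rmax_r.
  apply Rle_trans with (foldmax k g). apply IHk; lia. apply Rmax_l.
Qed.

Lemma foldmax_ex k g a : 0 < a -> a <= foldmax k g -> exists i, (i < k)%nat /\ a <= g i.
Proof.
  induction k; simpl; intros Ha H. lra.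
  destruct (Rle_dec a (foldmax k g)).
  destruct (IHk Ha r) as [i [Hi Hg]]. exists i. split; auto.
  exists k. split. lia. unfold Rmax in H. destruct (Rle_dec (foldmax k g) (g k)); lra.
Qed.

Lemma foldmax_mono k g h : (forall i, (i < k)%nat -> g i <= h i) -> foldmax k g <= foldmax k h.
Proof.
  induction k; simpl; intros H. lra.
  apply Rmax_lub. apply Rle_trans with (foldmax k h). apply IHk; intros; apply H; lia. apply Rmax_l.
  apply Rle_trans with (h k). apply H; lia. apply Rmax_r.
Qed.

Lemma foldmax_scale k g D : 0 <= D -> foldmax k (fun i => g i * D) = foldmax k g * D.
Proof.
  intros HD; induction k; simpl. lra. rewrite IHk.
  unfold Rmax. destruct (Rle_dec (foldmax k g * D) (g k * D)); destruct (Rle_dec (foldmax k g) (g k)); auto.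
  destruct HD as [HD|HD]. exfalso. apply n. apply Rmult_le_reg_r with D; lra. subst; ring.
  destruct HD as [HD|HD]. exfalso. apply n. apply Rmult_le_compat_r; lra. subst; ring.
Qed.

Lemma foldmax_ext k g h : (forall i, (i < k)%nat -> g i = h i) -> foldmax k g = foldmax k h.
Proof. induction k; simpl; intros H. auto. rewrite IHk, H; auto; intros; apply H; lia. Qed.

Lemma foldmin_ge k g c : c <= 1 -> (forall i, (i < k)%nat -> c <= g i) -> c <= foldmin k g.
Proof.
  intros Hc; induction k; simpl; intros H. exact Hc.
  apply Rmin_glb. apply IHk; intros; apply H; lia. apply H; lia.
Qed.

Lemma foldmin_lb k g i : (i < k)%nat -> foldmin k g <= g i.
Proof.
  induction k; simpl; intros H. lia.
  destruct (Nat.eq_dec i k). subst. apply Rmin_r.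
  apply Rle_trans with (foldmin k g). apply Rmin_l. apply IHk; lia.
Qed.

Lemma foldmin_le1 k g : foldmin k g <= 1.
Proof. induction k; simpl. lra. apply Rle_trans with (foldmin k g); auto. apply Rmin_l. Qed.

Lemma foldmin_usc k g g' eps : 0 < eps -> (forall i, (i < k)%nat -> g' i < g i + eps) ->
  foldmin k g' < foldmin k g + eps.
Proof.
  intros He; induction k; simpl; intros H. lra.
  assert (H1 : foldmin k g' < foldmin k g + eps) by (apply IHk; intros; apply H; lia).
  assert (H2 : g' k < g k + eps) by (apply H; lia).
  unfold Rmin. destruct (Rle_dec (foldmin k g') (g' k)); destruct (Rle_dec (foldmin k g) (g k)); lra.
Qed.

Lemma ext_in {A} m (d : A) g (i : idx m) : ext m d g (proj1_sig i) = g i.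
Proof.
  destruct i as [i Hi]. unfold ext. simpl. destruct (Compare_dec.lt_dec i m). 
  f_equal. f_equal. apply le_unique. contradiction.
Qed.

Lemma ext_out {A} m (d : A) g i : (i < m)%nat -> exists j : idx m, ext m d g i = g j /\ proj1_sig j = i.
Proof.
  intros H. exists (exist _ i H). split. apply (ext_in m d g (exist _ i H)). reflexivity.
Qed.

Lemma fmax_ge0 m g : 0 <= fmax m g.
Proof. apply foldmax_ge0. Qed.

Lemma fmax_le m g c : 0 <= c -> (forall j, g j <= c) -> fmax m g <= c.
Proof.
  intros Hc H. apply foldmax_le; auto. intros i Hi. destruct (ext_out m 0 g i Hi) as [j [-> _]]. auto.
Qed.

Lemma fmax_lt m g c : 0 < c -> (forall j, g j < c) -> fmax m g < c.
Proof.
  intros Hc H. apply foldmax_lt; auto. intros i Hi. destruct (ext_out m 0 g i Hi) as [j [-> _]]. auto.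
Qed.

Lemma fmax_ub m g j : g j <= fmax m g.
Proof.
  unfold fmax. rewrite <- (ext_in m 0 g j). apply foldmax_ub. destruct j; simpl; auto.
Qed.

Lemma fmax_ex m g a : 0 < a -> a <= fmax m g -> exists j, a <= g j.
Proof.
  intros Ha H. destruct (foldmax_ex _ _ _ Ha H) as [i [Hi Hg]].
  destruct (ext_out m 0 g i Hi) as [j [Hj _]]. exists j. rewrite <- Hj. auto.
Qed.

Lemma fmax_mono m g h : (forall j, g j <= h j) -> fmax m g <= fmax m h.
Proof.
  intros H. apply foldmax_mono. intros i Hi. destruct (ext_out m 0 g i Hi) as [j [Hj Hj']].
  rewrite Hj. destruct (ext_out m 0 h i Hi) as [j2 [Hj2 Hj2']]. rewrite Hj2.
  replace j2 with j. auto. destruct j, j2; simpl in *; subst. f_equal. apply le_unique.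
Qed.

Lemma fmax_scale m g D : 0 <= D -> fmax m (fun j => g j * D) = fmax m g * D.
Proof.
  intros HD. unfold fmax. rewrite <- foldmax_scale by auto. apply foldmax_ext.
  intros i _. unfold ext. destruct (Compare_dec.lt_dec i m); lra.
Qed.

Lemma fmin_ge m g c : c <= 1 -> (forall j, c <= g j) -> c <= fmin m g.
Proof.
  intros Hc H. apply foldmin_ge; auto. intros i Hi. destruct (ext_out m 1 g i Hi) as [j [-> _]]. auto.
Qed.

Lemma fmin_lb m g j : fmin m g <= g j.
Proof.
  unfold fmin. rewrite <- (ext_in m 1 g j). apply foldmin_lb. destruct j; simpl; auto.
Qed.

Lemma fmin_le1 m g : fmin m g <= 1.
Proof. apply foldmin_le1. Qed.

Lemma fmin_usc m g g' eps : 0 < eps -> (forall j, g' j < g j + eps) -> fmin m g' < fmin m g + eps.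
Proof.
  intros He H. apply foldmin_usc; auto. intros i Hi. unfold ext. destruct (Compare_dec.lt_dec i m); auto. lra.
Qed.

Lemma wit_lt phi : matkowski_witness phi -> forall s, 0 < s -> phi s < s.
Proof.
  intros [H0 [Hm Hc]] s Hs. apply Rnot_le_lt. intro Hle.
  assert (Hk : forall k, s <= Nat.iter k phi s).
  { induction k. simpl; lra. simpl. apply Rle_trans with (phi s). lra. apply Hm; lra. }
  destruct (Hc s Hs s Hs) as [N HN]. specialize (HN N (le_n N)). unfold R_dist in HN.
  specialize (Hk N). rewrite Rminus_0_r, Rabs_right in HN; lra.
Qed.

Lemma wit_0 phi : matkowski_witness phi -> phi 0 = 0.
Proof.
  intros Hw. pose proof Hw as [H0 [Hm Hc]].
  assert (0 <= phi 0) by (apply H0; lra).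
  destruct H as [H|H]; [|auto].
  assert (phi 0 <= phi (phi 0)) by (apply Hm; lra).
  pose proof (wit_lt phi Hw (phi 0) H). lra.
Qed.

Lemma wit_le phi : matkowski_witness phi -> forall s, 0 <= s -> phi s <= s.
Proof.
  intros Hw s [Hs|Hs]. left; apply wit_lt; auto. subst. rewrite wit_0; auto; lra.
Qed.

Lemma finite_uniform n (P : idx n -> R -> Prop) c :
  (forall j s s', c < s' <= s -> P j s -> P j s') ->
  (forall j, exists s, c < s /\ P j s) -> exists s, c < s /\ forall j, P j s.
Proof.
  intros Hd Hex.
  assert (forall k, exists s, c < s /\ forall j, (proj1_sig j < k)%nat -> P j s).
  { induction k.
    - exists (c+1). split. lra. intros j Hj. lia.
    - destruct IHk as [s [Hs HP]]. destruct (Compare_dec.lt_dec k n) as [Hk|Hk].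
      + destruct (Hex (exist _ k Hk)) as [sk [Hsk HPk]].
        exists (Rmin s sk). split. apply Rmin_glb_lt; auto.
        intros j Hj. destruct (Nat.eq_dec (proj1_sig j) k) as [E|E].
        * apply Hd with sk. split. apply Rmin_glb_lt; auto. apply Rmin_r.
          replace j with (exist (fun i => (i < n)%nat) k Hk); auto.
          destruct j; simpl in *; subst. f_equal. apply le_unique.
        * apply Hd with s. split. apply Rmin_glb_lt; auto. apply Rmin_l. apply HP. lia.
      + exists s. split; auto. intros j Hj. apply HP. destruct j; simpl in *; lia. }
  destruct (H n) as [s [Hs HP]]. exists s. split; auto. intro j. apply HP. destruct j; simpl; auto.
Qed.

Lemma max_witness n (ph : idx n -> R -> R) :
  (forall j, matkowski_witness (ph j)) -> matkowski_witness (fun t => fmax n (fun j => ph j t)).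
Proof.
  intros Hw. set (psi := fun t => fmax n (fun j => ph j t)).
  assert (Hpsi0 : forall t, 0 <= psi t) by (intros; apply fmax_ge0).
  assert (Hpsim : forall s t, 0 <= s <= t -> psi s <= psi t).
  { intros s t Hst. apply fmax_mono. intro j. destruct (Hw j) as [_ [Hm _]]. apply Hm; auto. }
  assert (Hpsilt : forall s, 0 < s -> psi s < s).
  { intros s Hs. apply fmax_lt; auto. intro j. apply wit_lt; auto. }
  assert (Hpsile : forall s, 0 <= s -> psi s <= s).
  { intros s Hs. apply fmax_le; auto. intro j. apply wit_le; auto. }
  split; [|split]; auto. fold psi.
  intros t Ht. set (s := fun k => Nat.iter k psi t).
  assert (Hs0 : forall k, 0 <= s k). { intro k; destruct k; simpl. lra. apply Hpsi0. }
  assert (HsS : forall k, s (S k) = psi (s k)) by reflexivity.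
  apply NNPP. intro Hncv.
  assert (Heps : exists eps, 0 < eps /\ forall N, exists k, (k >= N)%nat /\ eps <= s k).
  { apply NNPP. intro Hn. apply Hncv. intros eps He.
    apply NNPP. intro Hn2. apply Hn. exists eps. split; auto. intro N.
    apply NNPP. intro Hn3. apply Hn2. exists N. intros k Hk. unfold R_dist.
    rewrite Rminus_0_r, Rabs_right by (apply Rle_ge; apply Hs0).
    apply Rnot_le_lt. intro. apply Hn3. exists k. split; auto. }
  destruct Heps as [eps [He Hinf]].
  assert (Hdec : forall k k', (k <= k')%nat -> s k' <= s k).
  { intros k k' Hk. induction Hk. lra. rewrite HsS. apply Rle_trans with (s m); auto. }
  assert (Hall : forall k, eps <= s k).
  { intro k. destruct (Hinf k) as [k' [Hk' Hle]]. apply Rle_trans with (s k'); auto. }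
  set (E := fun x => exists k, x = s k).
  set (c := Rinf E).
  assert (HEne : exists x, E x) by (exists (s 0%nat); exists 0%nat; auto).
  assert (HEb : forall y, E y -> 0 <= y) by (intros y [k ->]; auto).
  assert (Hc_ge : eps <= c) by (apply Rinf_ge; auto; intros y [k ->]; auto).
  assert (Hc_le : forall k, c <= s k) by (intro k; apply Rinf_le with 0; auto; exists k; auto).
  assert (Hc_lt : forall k, c < s k).
  { intro k. apply Rle_lt_trans with (s (S k)); auto. rewrite HsS. apply Hpsilt. specialize (Hc_le k). lra. }
  assert (Hc_app : forall s', c < s' -> exists k, s k < s').
  { intros s' Hs'. assert (Hp : 0 < s' - c) by lra.
    destruct (Rinf_approx E 0 (s' - c) HEne HEb Hp) as [x [[k ->] Hx]].
    exists k. unfold c in *. lra. }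
  assert (Hj : exists j, forall s', c < s' -> c < ph j s').
  { apply NNPP. intro Hn.
    assert (Hbad : forall j, exists s', c < s' /\ ph j s' <= c).
    { intro j. apply NNPP. intro Hn2. apply Hn. exists j. intros s' Hs'.
      apply Rnot_le_lt. intro. apply Hn2. exists s'. auto. }
    destruct (finite_uniform n (fun j s' => ph j s' <= c) c) as [s' [Hs' HP]].
    { intros j a b Hab Ha. apply Rle_trans with (ph j a); auto.
      destruct (Hw j) as [_ [Hm _]]. apply Hm. lra. }
    exact Hbad.
    destruct (Hc_app s' Hs') as [k Hk].
    assert (psi (s k) <= c).
    { apply fmax_le. lra. intro j. apply Rle_trans with (ph j s'); auto.
      destruct (Hw j) as [_ [Hm _]]. apply Hm. split; auto. lra. }
    rewrite <- HsS in H. specialize (Hc_lt (S k)). lra. }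
  destruct Hj as [j Hj].
  assert (Hit : forall k, c < Nat.iter k (ph j) t).
  { induction k. simpl. specialize (Hc_lt 0%nat). simpl in Hc_lt. auto. simpl. apply Hj; auto. }
  destruct (Hw j) as [_ [_ Hcv]]. destruct (Hcv t Ht c) as [N HN]. lra.
  specialize (HN N (le_n N)). specialize (Hit N). unfold R_dist in HN.
  rewrite Rminus_0_r, Rabs_right in HN; lra.
Qed.

Definition cv (M : Metric_Space) (x : nat -> Base M) (p : Base M) : Prop :=
  forall eps, 0 < eps -> exists N, forall k, (k >= N)%nat -> dist M p (x k) < eps.

Definition incr (s : nat -> nat) : Prop := forall k, (s k < s (S k))%nat.

Lemma incr_mono s : incr s -> forall a b, (a < b)%nat -> (s a < s b)%nat.
Proof.
  intros H a b Hab. induction Hab. apply H. specialize (H m). lia.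
Qed.

Lemma incr_ge s : incr s -> forall k, (k <= s k)%nat.
Proof. intros H k. induction k. lia. specialize (H k). lia. Qed.

Lemma incr_comp s t : incr s -> incr t -> incr (fun k => s (t k)).
Proof. intros Hs Ht k. apply incr_mono; auto. Qed.

Lemma extract (Q : nat -> nat -> Prop) :
  (forall k N, exists n, (n >= N)%nat /\ Q k n) -> exists s, incr s /\ forall k, Q k (s k).
Proof.
  intros H.
  assert (HF : exists F : nat -> nat -> nat, forall k N, (F k N >= N)%nat /\ Q k (F k N)).
  { exists (fun k N => proj1_sig (constructive_indefinite_description _ (H k N))).
    intros k N. exact (proj2_sig (constructive_indefinite_description _ (H k N))). }
  destruct HF as [F HF].
  exists (fix s k := match k with O => F O O | S k' => F (S k') (S (s k')) end).
  split.
  - intro k. simpl. destruct (HF (S k) (S ((fix s (k0 : nat) : nat :=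
       match k0 with | 0%nat => F 0%nat 0%nat | S k' => F (S k') (S (s k')) end) k))). lia.
  - intro k. destruct k; apply HF.
Qed.

Lemma cv_sub M x p s : cv M x p -> incr s -> cv M (fun k => x (s k)) p.
Proof.
  intros H Hs eps He. destruct (H eps He) as [N HN]. exists N. intros k Hk.
  apply HN. pose proof (incr_ge s Hs k). lia.
Qed.

Lemma dist_ge0 (M : Metric_Space) x y : 0 <= dist M x y.
Proof. apply Rge_le, dist_pos. Qed.

Lemma dist_self (M : Metric_Space) x : dist M x x = 0.
Proof. apply dist_refl. reflexivity. Qed.

Lemma ball_open M c r : is_open M (fun y => dist M c y < r).
Proof.
  intros y Hy. exists (r - dist M c y). split. lra. intros z Hz.
  pose proof (dist_tri M c z y). lra.
Qed.

Lemma small_inv eps : 0 < eps -> exists N, forall k, (k >= N)%nat -> / INR (S k) < eps.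
Proof.
  intros He. destruct (archimed (/ eps)) as [H1 _].
  assert (0 < / eps) by (apply Rinv_0_lt_compat; auto).
  exists (Z.to_nat (up (/ eps))). intros k Hk.
  assert (Hk' : / eps < INR (S k)).
  { apply Rlt_le_trans with (IZR (up (/eps))); auto.
    rewrite S_INR. assert (IZR (up (/eps)) <= INR k).
    { rewrite <- (Z2Nat.id (up (/eps))). rewrite <- INR_IZR_INZ. apply le_INR. lia.
      apply le_IZR. lra. }
    lra. }
  assert (0 < INR (S k)) by (apply lt_0_INR; lia).
  rewrite <- (Rinv_inv eps). apply Rinv_lt_contravar; auto. apply Rmult_lt_0_compat; auto.
Qed.

Lemma inv_pos k : 0 < / INR (S k).
Proof. apply Rinv_0_lt_compat. apply lt_0_INR. lia. Qed.

Lemma inv_decr k k' : (k <= k')%nat -> / INR (S k') <= / INR (S k).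
Proof.
  intros H. apply Rinv_le_contravar. apply lt_0_INR; lia. apply le_INR; lia.
Qed.

Lemma cpt_seq M K (x : nat -> Base M) :
  is_compact M K -> (forall k, K (x k)) ->
  exists s p, incr s /\ K p /\ cv M (fun k => x (s k)) p.
Proof.
  intros HK Hx.
  assert (Hcl : exists p, K p /\ forall r, 0 < r -> forall N, exists k, (k >= N)%nat /\ dist M p (x k) < r).
  { apply NNPP. intro Hn.
    set (I := {p : Base M & {r : R & {N : nat | 0 < r /\ forall k, (k >= N)%nat -> r <= dist M p (x k)}}}).
    set (U := fun (i : I) y => dist M (projT1 i) y < projT1 (projT2 i)).
    destruct (HK I U) as [l Hl].
    - intro i. apply ball_open.
    - intros y Hy. apply NNPP. intro Hn2. apply Hn. exists y. split; auto. intros r Hr N.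
      apply NNPP. intro Hn3. apply Hn2.
      assert (HH : 0 < r /\ forall k, (k >= N)%nat -> r <= dist M y (x k)).
      { split; auto. intros k Hk. apply Rnot_lt_le. intro. apply Hn3. exists k. auto. }
      exists (existT _ y (existT _ r (exist _ N HH))). unfold U. simpl. rewrite dist_self. lra.
    - set (Nst := fold_right (fun (i : I) acc => Nat.max (proj1_sig (projT2 (projT2 i))) acc) 0%nat l).
      assert (HN : forall i, In i l -> (proj1_sig (projT2 (projT2 i)) <= Nst)%nat).
      { unfold Nst. clear. induction l; simpl; intros i Hi. contradiction.
        destruct Hi as [->|Hi]. lia. specialize (IHl i Hi). lia. }
      destruct (Hl (x Nst) (Hx Nst)) as [i [Hi HU]].
      unfold U in HU. specialize (HN _ Hi). clear Hi.
      destruct i as [p [r [N [Hr HNr]]]]. simpl in HU, HN.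
      specialize (HNr Nst HN). lra. }
  destruct Hcl as [p [Kp Hp]].
  destruct (extract (fun k n => dist M p (x n) < / INR (S k))) as [s [Hs Hsp]].
  { intros k N. apply Hp. apply inv_pos. }
  exists s, p. split; auto. split; auto.
  intros eps He. destruct (small_inv eps He) as [N HN]. exists N. intros k Hk.
  apply Rlt_le_trans with (/ INR (S k)). apply Hsp. left. apply HN. auto.
Qed.

Lemma finite_nat_uniform m (P : idx m -> nat -> Prop) :
  (forall i N N', (N <= N')%nat -> P i N -> P i N') ->
  (forall i, exists N, P i N) -> exists N, forall i, P i N.
Proof.
  intros Hm Hex.
  assert (forall k, exists N, forall i, (proj1_sig i < k)%nat -> P i N).
  { induction k.
    - exists 0%nat. intros i Hi. lia.
    - destruct IHk as [N HP]. destruct (Compare_dec.lt_dec k m) as [Hk|Hk].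
      + destruct (Hex (exist _ k Hk)) as [Nk HPk].
        exists (Nat.max N Nk). intros i Hi. destruct (Nat.eq_dec (proj1_sig i) k) as [E|E].
        * apply Hm with Nk. lia.
          replace i with (exist (fun i => (i < m)%nat) k Hk); auto.
          destruct i; simpl in *; subst. f_equal. apply le_unique.
        * apply Hm with N. lia. apply HP. lia.
      + exists N. intros i Hi. apply HP. destruct i; simpl in *; lia. }
  destruct (H m) as [N HP]. exists N. intro i. apply HP. destruct i; simpl; auto.
Qed.

Lemma prod_seq M m (K : idx m -> Base M -> Prop) (z : nat -> idx m -> Base M) :
  (forall i, is_compact M (K i)) -> (forall k i, K i (z k i)) ->
  exists s w, incr s /\ forall i, cv M (fun k => z (s k) i) (w i).
Proof.
  intros HK Hz.
  assert (forall j, exists s w, incr s /\ forall i, (proj1_sig i < j)%nat -> cv M (fun k => z (s k) i) (w i)).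
  { induction j.
    - exists (fun k => k), (z 0%nat). split. intro k; lia. intros i Hi; lia.
    - destruct IHj as [s [w [Hs Hw]]]. destruct (Compare_dec.lt_dec j m) as [Hj|Hj].
      + set (i0 := exist (fun i => (i < m)%nat) j Hj).
        destruct (cpt_seq M (K i0) (fun k => z (s k) i0) (HK i0)) as [t [p [Ht [_ Hp]]]].
        { intro k. apply Hz. }
        exists (fun k => s (t k)), (fun i => if Nat.eq_dec (proj1_sig i) j then p else w i).
        split. apply incr_comp; auto.
        intros i Hi. destruct (Nat.eq_dec (proj1_sig i) j) as [E|E].
        * replace i with i0. exact Hp. destruct i; simpl in *; subst. unfold i0. f_equal. apply le_unique.
        * apply (cv_sub M (fun k => z (s k) i)). apply Hw. lia. auto.
      + exists s, w. split; auto. intros i Hi. apply Hw. destruct i; simpl in *; lia. }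
  destruct (H m) as [s [w [Hs Hw]]]. exists s, w. split; auto. intro i. apply Hw. destruct i; simpl; auto.
Qed.

Lemma cv_dm M m (z : nat -> idx m -> Base M) w :
  (forall i, cv M (fun k => z k i) (w i)) ->
  forall eps, 0 < eps -> exists N, forall k, (k >= N)%nat -> dm M m w (z k) < eps.
Proof.
  intros H eps He.
  destruct (finite_nat_uniform m (fun i N => forall k, (k >= N)%nat -> dist M (w i) (z k i) < eps)) as [N HN].
  { intros i N N' HNN HP k Hk. apply HP. lia. }
  { intro i. apply (H i eps He). }
  exists N. intros k Hk. unfold dm. apply fmax_lt. exact He. intro i. apply HN; auto.
Qed.

Lemma cv_unique M x p q : cv M x p -> cv M x q -> p = q.
Proof.
  intros Hp Hq. apply (dist_refl M). apply NNPP. intro Hne.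
  pose proof (dist_ge0 M p q). assert (Hd : 0 < dist M p q / 3) by lra.
  destruct (Hp _ Hd) as [N1 H1]. destruct (Hq _ Hd) as [N2 H2].
  specialize (H1 (Nat.max N1 N2) ltac:(lia)). specialize (H2 (Nat.max N1 N2) ltac:(lia)).
  pose proof (dist_tri M p q (x (Nat.max N1 N2))) as H3. rewrite (dist_sym M (x _) q) in H3. lra.
Qed.

Lemma cont_cv M m f (z : nat -> idx m -> Base M) w :
  continuous_m M m f -> (forall i, cv M (fun k => z k i) (w i)) -> cv M (fun k => f (z k)) (f w).
Proof.
  intros Hf Hz eps He. destruct (Hf w eps He) as [d [Hd Hfd]].
  destruct (cv_dm M m z w Hz d Hd) as [N HN]. exists N. intros k Hk. apply Hfd. auto.
Qed.

Lemma choice_fun {A B} (P : A -> B -> Prop) : (forall a, exists b, P a b) -> exists f, forall a, P a (f a).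
Proof.
  intros H. exists (fun a => proj1_sig (constructive_indefinite_description _ (H a))).
  intro a. exact (proj2_sig (constructive_indefinite_description _ (H a))).
Qed.

Lemma seq_cpt M (SS : Base M -> Prop) :
  (forall x : nat -> Base M, (forall k, SS (x k)) -> exists s p, incr s /\ SS p /\ cv M (fun k => x (s k)) p) ->
  is_compact M SS.
Proof.
  intros Hseq I U Hopen Hcov.
  destruct (classic (exists x0, SS x0)) as [[x0 Sx0]|HSe].
  2: { exists nil. intros x Sx. exfalso. apply HSe. exists x; auto. }
  assert (Hleb : exists d, 0 < d /\ forall x, SS x -> exists i, forall y, dist M x y < d -> U i y).
  { apply NNPP. intro Hn.
    assert (Hk : forall k, exists x, SS x /\ forall i, exists y, dist M x y < / INR (S k) /\ ~ U i y).
    { intro k. apply NNPP. intro Hn2. apply Hn. exists (/ INR (S k)). split. apply inv_pos.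
      intros x Sx. apply NNPP. intro Hn3. apply Hn2. exists x. split; auto. intro i.
      apply NNPP. intro Hn4. apply Hn3. exists i. intros y Hy. apply NNPP. intro. apply Hn4. exists y; auto. }
    destruct (choice_fun _ Hk) as [x Hx].
    destruct (Hseq x (fun k => proj1 (Hx k))) as [s [p [Hs [Sp Hcv]]]].
    destruct (Hcov p Sp) as [i Hi]. destruct (Hopen i p Hi) as [r [Hr Hball]].
    assert (Hr2 : 0 < r / 2) by lra.
    destruct (Hcv _ Hr2) as [N1 H1]. destruct (small_inv _ Hr2) as [N2 H2].
    set (k := Nat.max N1 N2).
    destruct (proj2 (Hx (s k)) i) as [y [Hy HnU]]. apply HnU. apply Hball.
    pose proof (dist_tri M p y (x (s k))). specialize (H1 k ltac:(lia)).
    specialize (H2 (s k)). pose proof (incr_ge s Hs k). specialize (H2 ltac:(lia)). lra. }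
  destruct Hleb as [d [Hd Hleb]].
  apply NNPP. intro Hnf.
  assert (Hcovl : forall l : list (Base M), (forall q, In q l -> SS q) ->
            exists li : list I, forall q, In q l -> forall y, dist M q y < d -> exists i, In i li /\ U i y).
  { induction l; intros Hl. exists nil. intros q Hq; destruct Hq.
    destruct IHl as [li Hli]. intros q Hq; apply Hl; right; auto.
    destruct (Hleb a (Hl a (or_introl eq_refl))) as [i Hi].
    exists (i :: li). intros q [<-|Hq] y Hy. exists i. split. left; auto. auto.
    destruct (Hli q Hq y Hy) as [i' [Hi' HU]]. exists i'. split. right; auto. auto. }
  assert (Hnext : forall l : list (Base M), exists x, (forall q, In q l -> SS q) -> SS x /\ forall q, In q l -> d <= dist M q x).
  { intro l. destruct (classic (forall q, In q l -> SS q)) as [Hl|Hl].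
    - apply NNPP. intro Hn. destruct (Hcovl l Hl) as [li Hli]. apply Hnf. exists li.
      intros x Sx. apply NNPP. intro Hn2. apply Hn. exists x. intros _. split; auto.
      intros q Hq. apply Rnot_lt_le. intro Hlt. apply Hn2. apply (Hli q Hq x Hlt).
    - exists x0. intro. contradiction. }
  destruct (choice_fun _ Hnext) as [G HG].
  set (pts := fix pts k := match k with O => nil | S k' => G (pts k') :: pts k' end).
  assert (Hpts : forall k q, In q (pts k) -> SS q).
  { induction k; simpl; intros q Hq. contradiction. destruct Hq as [<-|Hq]. apply HG. apply IHk. auto. }
  set (x := fun k => G (pts k)).
  assert (HxS : forall k, SS (x k)) by (intro k; apply HG; apply Hpts).
  assert (Hin : forall k k', (k < k')%nat -> In (x k) (pts k')).
  { intros k k' Hkk. induction Hkk; simpl. left; auto. right; auto. }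
  assert (Hsep : forall k k', (k < k')%nat -> d <= dist M (x k) (x k')).
  { intros k k' Hkk. apply (proj2 (HG (pts k') (Hpts k'))). apply Hin; auto. }
  destruct (Hseq x HxS) as [s [p [Hs [_ Hcv]]]].
  assert (Hd2 : 0 < d / 2) by lra. destruct (Hcv _ Hd2) as [N HN].
  pose proof (HN N (le_n N)). pose proof (HN (S N) ltac:(lia)).
  pose proof (Hsep (s N) (s (S N)) (Hs N)).
  pose proof (dist_tri M (x (s N)) (x (s (S N))) p). rewrite (dist_sym M (x (s N)) p) in H2. lra.
Qed.

Lemma cv_ext M x y p : (forall k, x k = y k) -> cv M x p -> cv M y p.
Proof. intros H Hc eps He. destruct (Hc eps He) as [N HN]. exists N. intros k Hk. rewrite <- H. auto. Qed.

Lemma level0_of_pos M (w : Base M -> R) x : 0 < w x -> level M w 0 x.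
Proof.
  intros H. unfold level. destruct (Rlt_dec 0 0). lra.
  intros eps He. exists x. split; auto. rewrite dist_self. auto.
Qed.

Lemma level_pos M (w : Base M -> R) a x : 0 < a -> (level M w a x <-> a <= w x).
Proof. intros Ha. unfold level. destruct (Rlt_dec 0 a). tauto. lra. Qed.

Lemma level0_eq M (w : Base M -> R) x : level M w 0 x = closure M (fun y => 0 < w y) x.
Proof. unfold level. destruct (Rlt_dec 0 0). lra. auto. Qed.

Section Fz.
Variable M : Metric_Space.
Variable m : nat.

Lemma fprod_vals (u : idx m -> Base M -> R) z :
  (forall i, fuzzy (u i)) -> 0 <= fprod m u z <= 1.
Proof.
  intros Hu. unfold fprod. split. apply fmin_ge. lra. intro i. apply Hu. apply fmin_le1.
Qed.

Lemma fprod_usc (u : idx m -> Base M -> R) :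
  (forall i, usc M (u i)) -> forall z eps, 0 < eps ->
  exists d, 0 < d /\ forall z', dm M m z z' < d -> fprod m u z' < fprod m u z + eps.
Proof.
  intros Hu z eps He.
  destruct (finite_uniform m (fun i d => forall y, dist M (z i) y < d -> u i y < u i (z i) + eps) 0) as [d [Hd HP]].
  { intros i s s' Hs HP y Hy. apply HP. lra. }
  { intro i. destruct (Hu i (z i) eps He) as [d [Hd HP]]. exists d. auto. }
  exists d. split; auto. intros z' Hz'. unfold fprod. apply fmin_usc; auto.
  intro i. apply HP. apply Rle_lt_trans with (dm M m z z'); auto.
  unfold dm. apply (fmax_ub m (fun i => dist M (z i) (z' i))).
Qed.

Variable Y : Type.
Variable T : (idx m -> Base M) -> Y.

Lemma zadeh_ge (f : (idx m -> Base M) -> R) z :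
  (forall z, f z <= 1) -> f z <= zadeh T f (T z).
Proof.
  intros Hf. unfold zadeh. destruct (excluded_middle_informative _) as [H|H].
  apply Rsup_ge. exists 1. intros r [z' [_ ->]]. auto. exists z. auto.
  exfalso. apply H. exists z. auto.
Qed.

Lemma zadeh_vals (f : (idx m -> Base M) -> R) y :
  (forall z, 0 <= f z <= 1) -> 0 <= zadeh T f y <= 1.
Proof.
  intros Hf. unfold zadeh. destruct (excluded_middle_informative _) as [[z Hz]|H]; [|lra].
  split. apply Rle_trans with (f z). apply Hf. apply Rsup_ge. exists 1. intros r [z' [_ ->]]. apply Hf.
  exists z; auto.
  apply Rsup_le. exists (f z). exists z; auto. intros r [z' [_ ->]]. apply Hf.
Qed.

Lemma zadeh_approx (f : (idx m -> Base M) -> R) y eps :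
  (forall z, 0 <= f z <= 1) -> 0 < zadeh T f y -> 0 < eps ->
  exists z, T z = y /\ zadeh T f y - eps < f z.
Proof.
  intros Hf Hp He. unfold zadeh in *. destruct (excluded_middle_informative _) as [[z0 Hz0]|H]; [|lra].
  destruct (Rsup_approx (fun r => exists z, T z = y /\ r = f z) eps) as [r [[z [Hz ->]] Hr]]; auto.
  exists (f z0). exists z0. auto. exists 1. intros r [z [_ ->]]. apply Hf.
  exists z. auto.
Qed.
End Fz.

Section Attain.
Variable M : Metric_Space.
Variable m : nat.
Variable u : idx m -> Base M -> R.
Hypothesis Hu : forall i, Fstar M (u i).
Variable ph : (idx m -> Base M) -> Base M.
Hypothesis Hph : continuous_m M m ph.

Let f := fprod m u.

Lemma f_vals z : 0 <= f z <= 1.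
Proof. apply fprod_vals. intro i. apply Hu. Qed.

Lemma limit_lemma (z : nat -> idx m -> Base M) (y : nat -> Base M) x c :
  (forall k, 0 < f (z k)) -> (forall k, ph (z k) = y k) -> cv M y x ->
  (forall eps, 0 < eps -> exists N, forall k, (k >= N)%nat -> c - eps < f (z k)) ->
  exists w, ph w = x /\ c <= f w.
Proof.
  intros Hpos Hy Hcv Hc.
  destruct (prod_seq M m (fun i => level M (u i) 0) z) as [s [w [Hs Hw]]].
  { intro i. apply Hu. }
  { intros k i. apply level0_of_pos. apply Rlt_le_trans with (f (z k)). auto. unfold f, fprod. apply (fmin_lb m (fun i0 => u i0 (z k i0)) i). }
  exists w. split.
  - apply (cv_unique M (fun k => y (s k))).
    apply (cv_ext M (fun k => ph (z (s k)))). intro; auto. apply cont_cv; auto.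
    apply cv_sub; auto.
  - apply Rnot_lt_le. intro Hlt. set (e := (c - f w) / 3). assert (He : 0 < e) by (unfold e; lra).
    destruct (fprod_usc M m u (fun i => proj1 (proj2 (proj2 (Hu i)))) w e He) as [d [Hd Hfd]].
    destruct (cv_dm M m (fun k => z (s k)) w Hw d Hd) as [N1 H1].
    destruct (Hc e He) as [N2 H2].
    set (k := Nat.max N1 N2). specialize (H1 k ltac:(lia)). specialize (Hfd _ H1).
    pose proof (incr_ge s Hs k). specialize (H2 (s k) ltac:(lia)). fold f in Hfd. unfold e in *. lra.
Qed.

Lemma attain x : 0 < zadeh ph f x -> exists w, ph w = x /\ zadeh ph f x <= f w.
Proof.
  intros Hp. set (g := zadeh ph f x) in *.
  assert (Hk : forall k, exists z, ph z = x /\ g - Rmin (g/2) (/ INR (S k)) < f z).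
  { intro k. apply zadeh_approx. apply f_vals. exact Hp. apply Rmin_glb_lt. lra. apply inv_pos. }
  destruct (choice_fun _ Hk) as [z Hz].
  apply (limit_lemma z (fun _ => x)).
  - intro k. destruct (Hz k) as [_ H]. pose proof (Rmin_l (g/2) (/ INR (S k))). lra.
  - intro k. apply Hz.
  - intros e He. exists 0%nat. intros. rewrite dist_self. auto.
  - intros e He. destruct (small_inv e He) as [N HN]. exists N. intros k Hkk.
    destruct (Hz k) as [_ H]. pose proof (Rmin_r (g/2) (/ INR (S k))). specialize (HN k Hkk). lra.
Qed.

Lemma zadeh_usc : usc M (zadeh ph f).
Proof.
  intros x eps He. set (g := zadeh ph f).
  assert (Hg : forall y, 0 <= g y <= 1) by (intro; apply zadeh_vals; apply f_vals).
  apply NNPP. intro Hn.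
  assert (Hk : forall k, exists y, dist M x y < / INR (S k) /\ g x + eps <= g y).
  { intro k. apply NNPP. intro Hn2. apply Hn. exists (/ INR (S k)). split. apply inv_pos.
    intros y Hy. apply Rnot_le_lt. intro. apply Hn2. exists y. auto. }
  destruct (choice_fun _ Hk) as [y Hy].
  assert (Hat : forall k, exists z, ph z = y k /\ g (y k) <= f z).
  { intro k. apply attain. specialize (Hg x). destruct (Hy k). unfold g in *. lra. }
  destruct (choice_fun _ Hat) as [z Hz].
  destruct (limit_lemma z y x (g x + eps)) as [w [Hw Hfw]].
  - intro k. destruct (Hz k). destruct (Hy k). specialize (Hg x). lra.
  - intro k. apply Hz.
  - intros e He'. destruct (small_inv e He') as [N HN]. exists N. intros k Hkk.
    destruct (Hy k). specialize (HN k Hkk). lra.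
  - intros e He'. exists 0%nat. intros k _. destruct (Hz k). destruct (Hy k). lra.
  - assert (f w <= g x). { rewrite <- Hw. apply zadeh_ge. intro; apply f_vals. } lra.
Qed.
End Attain.

Lemma comp_usc M (r : R -> R) (h : Base M -> R) :
  (forall x, 0 <= h x <= 1) -> usc M h ->
  (forall s t, 0 <= s <= t -> t <= 1 -> r s <= r t) ->
  (forall t, 0 <= t < 1 -> forall eps, 0 < eps -> exists delta, 0 < delta /\
      forall s, t <= s < t + delta -> s <= 1 -> Rabs (r s - r t) < eps) ->
  usc M (fun x => r (h x)).
Proof.
  intros Hh Husc Hm Hrc x eps He. destruct (Hh x) as [Hx0 Hx1].
  destruct (Rlt_dec (h x) 1) as [Hlt|Hge].
  - destruct (Hrc (h x) (conj Hx0 Hlt) eps He) as [d1 [Hd1 Hr]].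
    destruct (Husc x d1 Hd1) as [d [Hd Hud]]. exists d. split; auto. intros y Hy.
    specialize (Hud y Hy). destruct (Hh y) as [Hy0 Hy1].
    destruct (Rle_dec (h x) (h y)).
    + specialize (Hr (h y) (conj r0 Hud) Hy1). apply Rabs_def2 in Hr. lra.
    + assert (r (h y) <= r (h x)) by (apply Hm; lra). lra.
  - exists 1. split. lra. intros y _. destruct (Hh y).
    assert (r (h y) <= r (h x)) by (apply Hm; lra). lra.
Qed.

Lemma fmax_usc M n (h : idx n -> Base M -> R) :
  (forall j, usc M (h j)) -> usc M (fun x => fmax n (fun j => h j x)).
Proof.
  intros Hh x eps He.
  destruct (finite_uniform n (fun j d => forall y, dist M x y < d -> h j y < h j x + eps) 0) as [d [Hd HP]].
  { intros j s s' Hs HP y Hy. apply HP. lra. }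
  { intro j. destruct (Hh j x eps He) as [d [Hd HP]]. exists d. auto. }
  exists d. split; auto. intros y Hy. apply fmax_lt.
  pose proof (fmax_ge0 n (fun j => h j x)). lra.
  intro j. pose proof (fmax_ub n (fun j => h j x) j). specialize (HP j y Hy). simpl in *. lra.
Qed.

Lemma pigeon n (J : nat -> idx n) : exists j, forall N, exists k, (k >= N)%nat /\ J k = j.
Proof.
  apply NNPP. intro Hn.
  destruct (finite_nat_uniform n (fun j N => forall k, (k >= N)%nat -> J k <> j)) as [N HN].
  { intros j N N' HNN HP k Hk. apply HP. lia. }
  { intro j. apply NNPP. intro Hn2. apply Hn. exists j. intro N. apply NNPP. intro Hn3. apply Hn2.
    exists N. intros k Hk E. apply Hn3. exists k. auto. }
  apply (HN (J N) N (le_n N)). auto.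
Qed.

Section Z.
Variable M : Metric_Space.
Variables m n : nat.
Variable phi : idx n -> (idx m -> Base M) -> Base M.
Variable rho : idx n -> R -> R.
Hypothesis Hadm : admissible n rho.
Hypothesis Hcont : forall j, continuous_m M m (phi j).

Lemma rho_vals j t : 0 <= t <= 1 -> 0 <= rho j t <= 1.
Proof. intros. destruct Hadm as [Hg _]. apply Hg; auto. Qed.

Lemma rho_mono j s t : 0 <= s <= t -> t <= 1 -> rho j s <= rho j t.
Proof. destruct Hadm as [_ [Hm _]]. auto. Qed.

Lemma rho_0 j : rho j 0 = 0.
Proof. destruct Hadm as [_ [_ [_ [H _]]]]. auto. Qed.

Variable u : idx m -> Base M -> R.
Hypothesis Hu : forall i, Fstar M (u i).

Lemma Zop_vals x : 0 <= Zop M m n phi rho u x <= 1.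
Proof.
  unfold Zop. split. apply fmax_ge0. apply fmax_le. lra. intro j. apply rho_vals.
  apply zadeh_vals. intro; apply f_vals; auto.
Qed.

Lemma Zop_normal : exists x, Zop M m n phi rho u x = 1.
Proof.
  destruct (choice_fun (fun i x => u i x = 1)) as [xs Hxs].
  { intro i. apply Hu. }
  destruct Hadm as [_ [_ [_ [_ [j0 Hj0]]]]].
  exists (phi j0 xs).
  assert (Hf : fprod m u xs = 1).
  { apply Rle_antisym. apply fmin_le1. apply fmin_ge. lra. intro i. rewrite Hxs. lra. }
  assert (Hz : zadeh (phi j0) (fprod m u) (phi j0 xs) = 1).
  { apply Rle_antisym. apply zadeh_vals. intro; apply f_vals; auto.
    rewrite <- Hf at 1. apply zadeh_ge. intro; apply f_vals; auto. }
  apply Rle_antisym. apply Zop_vals.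
  unfold Zop. rewrite <- Hj0, <- Hz. apply (fmax_ub n (fun j => rho j (zadeh (phi j) (fprod m u) (phi j0 xs)))).
Qed.

Lemma Zop_usc : usc M (Zop M m n phi rho u).
Proof.
  unfold Zop. apply (fmax_usc M n (fun j x => rho j (zadeh (phi j) (fprod m u) x))).
  intro j. apply comp_usc.
  - intro; apply zadeh_vals. intro; apply f_vals; auto.
  - apply zadeh_usc; auto.
  - intros; apply rho_mono; auto.
  - destruct Hadm as [_ [_ [Hrc _]]]. apply Hrc.
Qed.

Lemma Zop_pos_ex x : 0 < Zop M m n phi rho u x ->
  exists j w, phi j w = x /\ 0 < fprod m u w /\ Zop M m n phi rho u x <= rho j (fprod m u w).
Proof.
  intros Hp. destruct (fmax_ex n _ _ Hp (Rle_refl _)) as [j Hj].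
  set (g := zadeh (phi j) (fprod m u) x) in *.
  assert (Hg : 0 <= g <= 1) by (apply zadeh_vals; intro; apply f_vals; auto).
  assert (Hgp : 0 < g).
  { destruct (proj1 Hg) as [H|H]; auto. rewrite <- H, rho_0 in Hj. fold (Zop M m n phi rho u x) in Hj. lra. }
  destruct (attain M m u Hu (phi j) (Hcont j) x Hgp) as [w [Hw Hgw]].
  exists j, w. split; auto. split. fold g in Hgw. lra.
  apply Rle_trans with (rho j g); auto. fold g in Hgw. apply rho_mono. lra. apply f_vals; auto.
Qed.

Lemma Zop_cpt : is_compact M (level M (Zop M m n phi rho u) 0).
Proof.
  set (Z := Zop M m n phi rho u).
  apply seq_cpt. intros x Hx.
  assert (Hx' : forall k, exists x', 0 < Z x' /\ dist M (x k) x' < / INR (S k)).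
  { intro k. specialize (Hx k). rewrite level0_eq in Hx. destruct (Hx _ (inv_pos k)) as [y [Hy Hd]].
    exists y; auto. }
  destruct (choice_fun _ Hx') as [x' Hx'p].
  assert (HJ : forall k, exists jw : idx n * (idx m -> Base M),
     phi (fst jw) (snd jw) = x' k /\ 0 < fprod m u (snd jw)).
  { intro k. destruct (Zop_pos_ex (x' k)) as [j [w [H1 [H2 _]]]]. apply Hx'p.
    exists (j, w). auto. }
  destruct (choice_fun _ HJ) as [jw Hjw].
  destruct (pigeon n (fun k => fst (jw k))) as [j Hj].
  destruct (extract (fun _ k => fst (jw k) = j)) as [t [Ht Htj]].
  { intros _ N. destruct (Hj N) as [k [Hk E]]. exists k. auto. }
  destruct (prod_seq M m (fun i => level M (u i) 0) (fun k => snd (jw (t k)))) as [s [w [Hs Hw]]].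
  { intro i. apply Hu. }
  { intros k i. apply level0_of_pos. apply Rlt_le_trans with (fprod m u (snd (jw (t k)))).
    apply Hjw. apply (fmin_lb m (fun i0 => u i0 (snd (jw (t k)) i0)) i). }
  assert (Hc' : cv M (fun k => x' (t (s k))) (phi j w)).
  { apply (cv_ext M (fun k => phi j (snd (jw (t (s k)))))).
    intro k. rewrite <- (Htj (s k)). apply Hjw.
    apply cont_cv; auto. }
  exists (fun k => t (s k)), (phi j w). split. apply incr_comp; auto. split.
  - rewrite level0_eq. intros eps He. destruct (Hc' eps He) as [N HN].
    exists (x' (t (s N))). split. apply Hx'p. apply HN. lia.
  - intros eps He. assert (He2 : 0 < eps / 2) by lra.
    destruct (Hc' _ He2) as [N1 H1]. destruct (small_inv _ He2) as [N2 H2].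
    exists (Nat.max N1 N2). intros k Hk.
    pose proof (dist_tri M (phi j w) (x (t (s k))) (x' (t (s k)))).
    specialize (H1 k ltac:(lia)). destruct (Hx'p (t (s k))) as [_ Hd].
    rewrite dist_sym in Hd.
    assert (k <= t (s k))%nat.
    { pose proof (incr_ge s Hs k). pose proof (incr_ge t Ht (s k)). lia. }
    specialize (H2 (t (s k)) ltac:(lia)). lra.
Qed.

Lemma Zop_Fstar : Fstar M (Zop M m n phi rho u).
Proof.
  split. intro x; apply Zop_vals. split. apply Zop_normal. split. apply Zop_usc. apply Zop_cpt.
Qed.
End Z.

Section H.
Variable M : Metric_Space.

Lemma dist_to_le a (B : Base M -> Prop) b : B b -> dist_to M a B <= dist M a b.
Proof.
  intros Hb. unfold dist_to. apply Rinf_le with 0. intros y [b' [_ ->]]. apply dist_ge0.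
  exists b; auto.
Qed.

Lemma dist_to_approx a (B : Base M -> Prop) eps : (exists b, B b) -> 0 < eps ->
  exists b, B b /\ dist M a b < dist_to M a B + eps.
Proof.
  intros [b0 Hb0] He. unfold dist_to.
  destruct (Rinf_approx (fun r => exists b, B b /\ r = dist M a b) 0 eps) as [r [[b [Hb ->]] Hr]]; auto.
  exists (dist M a b0). exists b0; auto. intros y [b' [_ ->]]. apply dist_ge0.
  exists b; auto.
Qed.

Lemma haus_le (A B : Base M -> Prop) C : (exists a, A a) -> (exists b, B b) ->
  (forall a, A a -> dist_to M a B <= C) -> (forall b, B b -> dist_to M b A <= C) -> hausdorff M A B <= C.
Proof.
  intros [a0 Ha0] [b0 Hb0] H1 H2. unfold hausdorff. apply Rmax_lub.
  apply Rsup_le. exists (dist_to M a0 B). exists a0; auto. intros r [a [Ha ->]]; auto.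
  apply Rsup_le. exists (dist_to M b0 A). exists b0; auto. intros r [b [Hb ->]]; auto.
Qed.

Lemma haus_ge1 (A B : Base M -> Prop) C a :
  (forall a, A a -> dist_to M a B <= C) -> A a -> dist_to M a B <= hausdorff M A B.
Proof.
  intros H Ha. unfold hausdorff. eapply Rle_trans; [|apply Rmax_l].
  apply Rsup_ge. exists C. intros r [a' [Ha' ->]]; auto. exists a; auto.
Qed.

Lemma haus_ge2 (A B : Base M -> Prop) C b :
  (forall b, B b -> dist_to M b A <= C) -> B b -> dist_to M b A <= hausdorff M A B.
Proof.
  intros H Hb. unfold hausdorff. eapply Rle_trans; [|apply Rmax_r].
  apply Rsup_ge. exists C. intros r [b' [Hb' ->]]; auto. exists b; auto.
Qed.

Lemma cpt_bounded K c : is_compact M K -> exists R, forall x, K x -> dist M c x <= R.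
Proof.
  intros HK. destruct (HK nat (fun k y => dist M c y < INR k)) as [l Hl].
  - intro k. apply ball_open.
  - intros x _. destruct (INR_unbounded (dist M c x)) as [k Hk]. exists k. lra.
  - exists (fold_right (fun k acc => Rmax (INR k) acc) 0 l). intros x Hx.
    destruct (Hl x Hx) as [k [Hk Hd]]. left. eapply Rlt_le_trans. apply Hd.
    clear Hl Hd. induction l; simpl in *. contradiction.
    destruct Hk as [->|Hk]. apply Rmax_l. eapply Rle_trans. apply IHl; auto. apply Rmax_r.
Qed.

Lemma level_sub0 (w : Base M -> R) a x : 0 <= a -> level M w a x -> level M w 0 x.
Proof.
  intros Ha H. destruct (Rle_lt_or_eq_dec 0 a Ha) as [Hp|E].
  apply level0_of_pos. apply (level_pos M w a x Hp) in H. lra. subst; auto.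
Qed.

Lemma level_ne (w : Base M -> R) a : Fstar M w -> 0 <= a <= 1 -> exists x, level M w a x.
Proof.
  intros [_ [[x Hx] _]] Ha. exists x. destruct (Rle_lt_or_eq_dec 0 a (proj1 Ha)) as [Hp|E].
  apply level_pos; auto. lra. subst. apply level0_of_pos. lra.
Qed.

Lemma pair_bound (u v : Base M -> R) : Fstar M u -> Fstar M v ->
  exists C, forall a, 0 <= a <= 1 -> forall x y, level M u a x -> level M v a y -> dist M x y <= C.
Proof.
  intros Hu Hv. pose proof Hu as [_ [[x1 _] [_ Ku]]]. pose proof Hv as [_ [[y1 _] [_ Kv]]].
  destruct (cpt_bounded _ x1 Ku) as [Ru HRu]. destruct (cpt_bounded _ y1 Kv) as [Rv HRv].
  exists (Ru + dist M x1 y1 + Rv). intros a Ha x y Hx Hy.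
  apply level_sub0 in Hx; [|lra]. apply level_sub0 in Hy; [|lra].
  specialize (HRu x Hx). specialize (HRv y Hy). rewrite dist_sym in HRu.
  pose proof (dist_tri M x y x1). pose proof (dist_tri M x1 y y1). lra.
Qed.

Lemma dinf_ge (u v : Base M -> R) a : Fstar M u -> Fstar M v -> 0 <= a <= 1 ->
  (forall x, level M u a x -> dist_to M x (level M v a) <= d_inf M u v) /\
  (forall y, level M v a y -> dist_to M y (level M u a) <= d_inf M u v).
Proof.
  intros Hu Hv Ha. destruct (pair_bound u v Hu Hv) as [C HC].
  assert (B1 : forall a', 0 <= a' <= 1 -> forall x, level M u a' x -> dist_to M x (level M v a') <= C).
  { intros a' Ha' x Hx. destruct (level_ne v a' Hv Ha') as [y Hy].
    eapply Rle_trans. apply (dist_to_le _ _ y Hy). apply (HC a'); auto. }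
  assert (B2 : forall a', 0 <= a' <= 1 -> forall y, level M v a' y -> dist_to M y (level M u a') <= C).
  { intros a' Ha' y Hy. destruct (level_ne u a' Hu Ha') as [x Hx].
    eapply Rle_trans. apply (dist_to_le _ _ x Hx). rewrite dist_sym. apply (HC a'); auto. }
  assert (Hh : hausdorff M (level M u a) (level M v a) <= d_inf M u v).
  { unfold d_inf. apply Rsup_ge. exists C. intros r [a' [Ha' ->]].
    apply haus_le. apply level_ne; auto. apply level_ne; auto. apply B1; auto. apply B2; auto.
    exists a; auto. }
  split.
  - intros x Hx. eapply Rle_trans; [|exact Hh]. apply haus_ge1 with C; auto.
  - intros y Hy. eapply Rle_trans; [|exact Hh]. apply haus_ge2 with C; auto.
Qed.

Lemma dist_to_attain (v : Base M -> R) s z D : Fstar M v -> 0 < s -> (exists w, s <= v w) ->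
  dist_to M z (level M v s) <= D -> exists w, s <= v w /\ dist M z w <= D.
Proof.
  intros Hv Hs [w0 Hw0] HD.
  assert (Hne : exists b, level M v s b) by (exists w0; apply level_pos; auto).
  assert (Hk : forall k, exists b, level M v s b /\ dist M z b < dist_to M z (level M v s) + / INR (S k)).
  { intro k. apply dist_to_approx; auto. apply inv_pos. }
  destruct (choice_fun _ Hk) as [b Hb].
  destruct (cpt_seq M (level M v 0) b) as [sg [p [Hsg [_ Hcv]]]].
  { apply Hv. } { intro k. apply level_sub0 with s. lra. apply Hb. }
  exists p. split.
  - apply Rnot_lt_le. intro Hlt. destruct Hv as [_ [_ [Husc _]]].
    destruct (Husc p (s - v p) ltac:(lra)) as [d [Hd Hud]].
    destruct (Hcv d Hd) as [N HN]. specialize (Hud _ (HN N (le_n N))).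
    destruct (Hb (sg N)) as [Hl _]. apply level_pos in Hl; auto. lra.
  - apply Rnot_lt_le. intro Hlt. set (e := (dist M z p - dist_to M z (level M v s)) / 3).
    assert (He : 0 < e) by (unfold e; lra).
    destruct (Hcv e He) as [N1 H1]. destruct (small_inv e He) as [N2 H2].
    set (k := Nat.max N1 N2). specialize (H1 k ltac:(lia)).
    pose proof (incr_ge sg Hsg k). specialize (H2 (sg k) ltac:(lia)).
    destruct (Hb (sg k)) as [_ Hd]. pose proof (dist_tri M z p (b (sg k))).
    rewrite (dist_sym M (b (sg k)) p) in H0. unfold e in *. lra.
Qed.

Lemma transfer (u v : Base M -> R) s z : Fstar M u -> Fstar M v -> 0 < s <= 1 ->
  (s <= u z -> exists w, s <= v w /\ dist M z w <= d_inf M u v) /\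
  (s <= v z -> exists w, s <= u w /\ dist M z w <= d_inf M u v).
Proof.
  intros Hu Hv Hs. destruct (dinf_ge u v s Hu Hv ltac:(lra)) as [H1 H2]. split; intro Hz.
  - apply dist_to_attain; auto. lra. destruct (level_ne v s Hv ltac:(lra)) as [w Hw].
    exists w. apply level_pos in Hw; auto. lra. apply H1. apply level_pos; auto. lra.
  - apply dist_to_attain; auto. lra. destruct (level_ne u s Hu ltac:(lra)) as [w Hw].
    exists w. apply level_pos in Hw; auto. lra. apply H2. apply level_pos; auto. lra.
Qed.

Lemma dinf_bound (U V : Base M -> R) C : Fstar M U -> Fstar M V ->
  (forall a, 0 < a -> forall x, a <= U x -> exists y, a <= V y /\ dist M x y <= C) ->
  (forall a, 0 < a -> forall x, a <= V x -> exists y, a <= U y /\ dist M x y <= C) ->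
  d_inf M U V <= C.
Proof.
  intros HU HV S1 S2.
  assert (G : forall (A B : Base M -> R), Fstar M B ->
     (forall a, 0 < a -> forall x, a <= A x -> exists y, a <= B y /\ dist M x y <= C) ->
     forall a, 0 <= a <= 1 -> forall x, level M A a x -> dist_to M x (level M B a) <= C).
  { intros A B HB S a Ha x Hx. destruct (Rle_lt_or_eq_dec 0 a (proj1 Ha)) as [Hp|E].
    - apply level_pos in Hx; auto. destruct (S a Hp x Hx) as [y [Hy Hd]].
      eapply Rle_trans; [|exact Hd]. apply dist_to_le. apply level_pos; auto.
    - subst. apply Rnot_lt_le. intro Hlt. set (e := (dist_to M x (level M B 0) - C) / 2).
      assert (He : 0 < e) by (unfold e; lra).
      rewrite level0_eq in Hx. destruct (Hx e He) as [x' [Hx' Hd]].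
      destruct (S (A x') Hx' x' (Rle_refl _)) as [y [Hy Hdy]].
      assert (Hl : level M B 0 y) by (apply level0_of_pos; lra).
      pose proof (dist_to_le x _ y Hl). pose proof (dist_tri M x y x'). unfold e in *. lra. }
  unfold d_inf. apply Rsup_le.
  - exists (hausdorff M (level M U 0) (level M V 0)). exists 0. split; auto. lra.
  - intros r [a [Ha ->]]. apply haus_le. apply level_ne; auto. apply level_ne; auto.
    apply G; auto. apply G; auto.
Qed.
End H.

Lemma Z_step (M : Metric_Space) (m n : nat)
  (phi : idx n -> (idx m -> Base M) -> Base M) (rho : idx n -> R -> R)
  (psi : idx n -> R -> R) (u v : idx m -> Base M -> R) (Dv : idx m -> R) :
  admissible n rho -> (forall j, continuous_m M m (phi j)) ->
  (forall i, Fstar M (u i)) -> (forall i, Fstar M (v i)) ->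
  (forall j s t, 0 <= s <= t -> psi j s <= psi j t) ->
  (forall j x y, dist M (phi j x) (phi j y) <= psi j (dm M m x y)) ->
  (forall i s z, 0 < s <= 1 -> s <= u i z -> exists w, s <= v i w /\ dist M z w <= Dv i) ->
  forall a, 0 < a -> forall x, a <= Zop M m n phi rho u x ->
  exists y, a <= Zop M m n phi rho v y /\ dist M x y <= fmax n (fun j => psi j (fmax m Dv)).
Proof.
  intros Hadm Hcont Hu Hv Hpm Hpd HT a Ha x Hx.
  destruct (Zop_pos_ex M m n phi rho Hadm Hcont u Hu x ltac:(lra)) as [j [w [Hw [Hfp Hfr]]]].
  set (s := fprod m u w) in *.
  assert (Hs1 : s <= 1) by (apply fmin_le1).
  assert (Hsi : forall i, s <= u i (w i)) by (intro i; apply (fmin_lb m (fun i => u i (w i)) i)).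
  destruct (choice_fun (fun i w' => s <= v i w' /\ dist M (w i) w' <= Dv i)) as [w' Hw'].
  { intro i. apply HT; auto. }
  exists (phi j w'). split.
  - apply Rle_trans with (rho j s). lra.
    eapply Rle_trans; [|apply (fmax_ub n (fun j0 => rho j0 (zadeh (phi j0) (fprod m v) (phi j w'))) j)].
    apply rho_mono; auto.
    split. lra. eapply Rle_trans; [|apply zadeh_ge]. apply fmin_ge; auto. intro i; apply Hw'.
    intro; apply fmin_le1.
    apply zadeh_vals. intro; apply fprod_vals. intro i; apply Hv.
  - rewrite <- Hw. eapply Rle_trans. apply Hpd.
    eapply Rle_trans; [|apply (fmax_ub n (fun j0 => psi j0 (fmax m Dv)) j)].
    apply Hpm. split. apply fmax_ge0. apply fmax_mono. intro i. apply Hw'.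
Qed.

Theorem mainTheorem11 (M : Metric_Space) (m n : nat)
  (phi : idx n -> (idx m -> Base M) -> Base M) (rho : idx n -> R -> R)
  (varphi : idx n -> R -> R) :
  admissible n rho ->
  (forall j, continuous_m M m (phi j)) ->
  (forall j, gen_matkowski (dm M m) (dist M) (phi j) (varphi j)) ->
  (* Z_S maps (F-star)^m into F-star *)
  (forall u : idx m -> Base M -> R,
     (forall i, Fstar M (u i)) -> Fstar M (Zop M m n phi rho u)) /\
  (* max_j varphi_j is a witness ... *)
  matkowski_witness (fun t => fmax n (fun j => varphi j t)) /\
  (* ... for the generalized Matkowski contractivity of Z_S *)
  (forall u v : idx m -> Base M -> R,
     (forall i, Fstar M (u i)) -> (forall i, Fstar M (v i)) ->
     d_inf M (Zop M m n phi rho u) (Zop M m n phi rho v)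
       <= fmax n (fun j => varphi j (d_inf_m M m u v))) /\
  (* Lipschitz case: Lipschitz constants L_j < 1 of the phi_j give
     Lipschitz constant max_j L_j for Z_S *)
  (forall L : idx n -> R,
     (forall j, 0 <= L j < 1 /\
        forall x y, dist M (phi j x) (phi j y) <= L j * dm M m x y) ->
     forall u v : idx m -> Base M -> R,
       (forall i, Fstar M (u i)) -> (forall i, Fstar M (v i)) ->
       d_inf M (Zop M m n phi rho u) (Zop M m n phi rho v)
         <= fmax n L * d_inf_m M m u v).
Proof.
  intros Hadm Hcont Hgm.
  assert (Gen : forall psi : idx n -> R -> R,
    (forall j s t, 0 <= s <= t -> psi j s <= psi j t) ->
    (forall j x y, dist M (phi j x) (phi j y) <= psi j (dm M m x y)) ->
    forall u v : idx m -> Base M -> R,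
     (forall i, Fstar M (u i)) -> (forall i, Fstar M (v i)) ->
     d_inf M (Zop M m n phi rho u) (Zop M m n phi rho v)
       <= fmax n (fun j => psi j (d_inf_m M m u v))).
  { intros psi Hpm Hpd u v Hu Hv. apply dinf_bound.
    - apply Zop_Fstar; auto.
    - apply Zop_Fstar; auto.
    - apply (Z_step M m n phi rho psi u v (fun i => d_inf M (u i) (v i))); auto.
      intros i s z Hs Hz. apply (proj1 (transfer M (u i) (v i) s z (Hu i) (Hv i) Hs)); auto.
    - apply (Z_step M m n phi rho psi v u (fun i => d_inf M (u i) (v i))); auto.
      intros i s z Hs Hz. apply (proj2 (transfer M (u i) (v i) s z (Hu i) (Hv i) Hs)); auto. }
  split; [|split; [|split]].
  - intros u Hu. apply Zop_Fstar; auto.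
  - apply max_witness. intro j. apply Hgm.
  - apply Gen. intros j s t Hst. apply (Hgm j). auto. intro j. apply Hgm.
  - intros L HL u v Hu Hv.
    rewrite <- fmax_scale by apply fmax_ge0.
    apply (Gen (fun j t => L j * t)); auto.
    intros j s t Hst. apply Rmult_le_compat_l. apply HL. apply Hst.
    intro j. apply HL.
Qed.
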